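(* Let $L\in R[x][\partial]$ have positive order and let $c$ be a non-unit element of $R$. If $L$ is $R$-primitive and $c$ divides $\mathrm{lc}_\partial(L)$, then $c$ divides $\mathrm{lc}_\partial(Q)$ for every $Q\in\mathrm{cont}(L)\setminus\{0\}$.
   Context: $R$ is a principal ideal domain with quotient field $Q_R$; $\sigma$ is an $R$-automorphism of $R[x]$ with $\sigma(x)=\gamma x+\tau$ ($\gamma,\tau\in R$, $\gamma$ a unit), $\delta$ an $R$-linear $\sigma$-derivation of $R[x]$ ($\delta(fg)=\sigma(f)\delta(g)+\delta(f)g$) with $\deg\delta(x)\le1$; $R[x][\partial]$ is the Ore algebra with $\partial p=\sigma(p)\partial+\delta(p)$, inside $Q_R(x)[\partial]$. $\mathrm{lc}_\partial$ denotes the leading coefficient with respect to $\partial$, and $\mathrm{cont}(L)=Q_R(x)[\partial]L\cap R[x][\partial]$. Writing $L=a_kf_k\partial^k+\dots+a_0f_0$ with $a_i\in R$ and $f_i\in R[x]$ primitive (gcd of coefficients $1$), $L$ is $R$-primitive if $\gcd(a_0,\dots,a_k)=1$. *)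

(* Defs.v *)
From HB Require Import structures.
From mathcomp Require Import all_boot all_order all_algebra.
Set Implicit Arguments.
Unset Strict Implicit.
Unset Printing Implicit Defensive.
Import Order.TTheory GRing.Theory Num.Theory.
Local Open Scope ring_scope.

Definition dvdR (R : comNzRingType) (c a : R) : Prop := exists b, a = b * c.

Definition is_ideal (R : comNzRingType) (I : R -> Prop) : Prop :=
  [/\ I 0, (forall a b, I a -> I b -> I (a + b)) & (forall r a, I a -> I (r * a))].

Definition is_pid (R : idomainType) : Prop :=
  forall I : R -> Prop, is_ideal I -> exists g : R, forall r, I r <-> dvdR g r.

(* Ore polynomials over a coefficient ring K are represented as {poly K}
   (variable = \partial, coefficients written on the left:
    P = \sum_i P`_i \partial^i).  Multiplication uses the commutation rule
    \partial a = s(a) \partial + d(a). *)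
Section Ore.
Variable K : comNzRingType.
Variables (s d : K -> K).

Definition ore_dmul (P : {poly K}) : {poly K} :=
  map_poly s P * 'X + map_poly d P.

Definition ore_mul (P Q : {poly K}) : {poly K} :=
  \sum_(i < size P) P`_i *: iter i ore_dmul Q.
End Ore.

Section FracExt.
Variable D : idomainType.
Definition fnum (x : {fraction D}) : D := \n_(repr x).
Definition fden (x : {fraction D}) : D := \d_(repr x).

Local Notation "x %:F" := (@FracField.tofrac D x).
Variables (s d : D -> D).
Definition sigmaF (x : {fraction D}) : {fraction D} :=
  (s (fnum x))%:F / (s (fden x))%:F.
(* Extension of the s-derivation d to Frac(D):
   d(n/m) = s(n) d(1/m) + d(n)/m  with  d(1/m) = - d(m) / (s(m) m). *)
Definition deltaF (x : {fraction D}) : {fraction D} :=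
  (d (fnum x))%:F / (fden x)%:F
  - (s (fnum x))%:F * (d (fden x))%:F / ((s (fden x))%:F * (fden x)%:F).
End FracExt.

Section OreRx.
Variable R : idomainType.
Variables (sigma delta : {poly R} -> {poly R}).

(* cont(L) = Q_R(x)[\partial] L  \cap  R[x][\partial],
   with Q_R(x) realized as Frac(R[x]). *)
Definition in_cont (L Q : {poly {poly R}}) : Prop :=
  exists T : {poly {fraction {poly R}}},
    map_poly (@FracField.tofrac {poly R}) Q =
    ore_mul (sigmaF sigma) (deltaF sigma delta) T (map_poly (@FracField.tofrac {poly R}) L).
End OreRx.

(* L is R-primitive: the gcd of all coefficients in R of L is 1, i.e.
   every common divisor in R of all R-coefficients of L is a unit. *)
Definition R_primitive (R : idomainType) (L : {poly {poly R}}) : Prop :=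
  forall r : R, (forall i j, dvdR r (L`_i)`_j) -> r \is a GRing.unit.

Definition dvdRP (R : idomainType) (c : R) (f : {poly R}) : Prop :=
  dvdR (c%:P) f.

(* Main.v *)
Require Import Defs.
From HB Require Import structures.
From mathcomp Require Import all_boot all_order all_algebra.
From mathcomp Require Import ring.
From Stdlib Require Import ClassicalEpsilon Classical.
Import Order.TTheory GRing.Theory Num.Theory.
Local Open Scope ring_scope.

Section OreGen.
Variable K : comNzRingType.
Variables (s d : K -> K).
Local Notation dm := (ore_dmul s d).
Local Notation om := (ore_mul s d).

Lemma om_gen n (T L : {poly K}) : (size T <= n)%N ->
  om T L = \sum_(i < n) T`_i *: iter i dm L.
Proof.
move=> Hn; rewrite /ore_mul (big_ord_widen n (fun i => T`_i *: iter i dm L) Hn).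
rewrite big_mkcond /=; apply: eq_bigr => i _.
case: ifP => // /negbT; rewrite -leqNgt => Hi.
by rewrite nth_default // scale0r.
Qed.

Lemma om0l (L : {poly K}) : om 0 L = 0.
Proof. by rewrite /ore_mul size_poly0 big_ord0. Qed.

Lemma omZ (a : K) (T L : {poly K}) : om (a *: T) L = a *: om T L.
Proof.
rewrite (@om_gen (size T)) ?size_scale_leq // /ore_mul scaler_sumr.
by apply: eq_bigr => i _; rewrite coefZ scalerA.
Qed.

Lemma omD (T1 T2 L : {poly K}) : om (T1 + T2) L = om T1 L + om T2 L.
Proof.
set n := maxn (size T1) (size T2).
rewrite (@om_gen n (T1 + T2)) ?size_add // (@om_gen n T1) ?leq_maxl //.
rewrite (@om_gen n T2) ?leq_maxr // -big_split /=.
by apply: eq_bigr => i _; rewrite coefD scalerDl.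
Qed.

Lemma omX k (L : {poly K}) : om ('X^k) L = iter k dm L.
Proof.
rewrite /ore_mul size_polyXn big_ord_recr /= big1 ?add0r.
  by rewrite coefXn eqxx scale1r.
by move=> i _; rewrite coefXn (ltn_eqF (ltn_ord i)) scale0r.
Qed.

Hypothesis s0 : s 0 = 0.
Hypothesis d0 : d 0 = 0.
Hypothesis s_add : forall p q, s (p + q) = s p + s q.
Hypothesis d_add : forall p q, d (p + q) = d p + d q.

Lemma coef_dm (P : {poly K}) i : (dm P)`_i = (if i == 0%N then 0 else s P`_i.-1) + d P`_i.
Proof. by rewrite /ore_dmul coefD coefMX !coef_map_id0. Qed.

Lemma dmD (P Q : {poly K}) : dm (P + Q) = dm P + dm Q.
Proof.
apply/polyP => i; rewrite coefD !coef_dm !coefD d_add.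
case: (i == 0%N); rewrite ?add0r ?s_add; ring.
Qed.

Lemma iter_dmD k (P Q : {poly K}) : iter k dm (P + Q) = iter k dm P + iter k dm Q.
Proof. by elim: k => //= k ->; rewrite dmD. Qed.

Lemma omDr (T L1 L2 : {poly K}) : om T (L1 + L2) = om T L1 + om T L2.
Proof.
rewrite /ore_mul -big_split /=; apply: eq_bigr => i _.
by rewrite iter_dmD scalerDr.
Qed.

End OreGen.


Section OreMap.
Variables (K K' : comNzRingType) (phi : {rmorphism K -> K'}).
Hypothesis phi_inj : injective phi.
Variables (s d : K -> K) (s' d' : K' -> K').
Hypothesis s0 : s 0 = 0.
Hypothesis d0 : d 0 = 0.
Hypothesis s'phi : forall x, s' (phi x) = phi (s x).
Hypothesis d'phi : forall x, d' (phi x) = phi (d x).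

Lemma map_dm (P : {poly K}) :
  map_poly phi (ore_dmul s d P) = ore_dmul s' d' (map_poly phi P).
Proof.
have s'0 : s' 0 = 0 by rewrite -(rmorph0 phi) s'phi s0 rmorph0.
have d'0 : d' 0 = 0 by rewrite -(rmorph0 phi) d'phi d0 rmorph0.
rewrite /ore_dmul rmorphD rmorphM /= map_polyX; congr (_ * _ + _);
  apply/polyP => i; rewrite !coef_map_id0 ?rmorph0 //= ?coef_map //= ?s'phi ?d'phi //.
Qed.

Lemma map_iter_dm k (P : {poly K}) :
  map_poly phi (iter k (ore_dmul s d) P) = iter k (ore_dmul s' d') (map_poly phi P).
Proof. by elim: k => //= k <-; rewrite map_dm. Qed.

Lemma map_om (T L : {poly K}) :
  map_poly phi (ore_mul s d T L) = ore_mul s' d' (map_poly phi T) (map_poly phi L).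
Proof.
rewrite /ore_mul size_map_inj_poly ?rmorph0 // rmorph_sum /=.
by apply: eq_bigr => i _; rewrite map_polyZ coef_map map_iter_dm.
Qed.
End OreMap.

Section OreSize.
Variable K : idomainType.
Variables (s d : K -> K).
Hypothesis s0 : s 0 = 0.
Hypothesis d0 : d 0 = 0.
Hypothesis s_neq0 : forall x, x != 0 -> s x != 0.
Local Notation dm := (ore_dmul s d).
Local Notation om := (ore_mul s d).

Lemma size_map_le (f : K -> K) (P : {poly K}) : f 0 = 0 -> (size (map_poly f P) <= size P)%N.
Proof.
move=> f0; apply/leq_sizeP => j Hj; rewrite coef_map_id0 //.
by rewrite nth_default.
Qed.

Lemma dm_size (P : {poly K}) : P != 0 ->
  size (dm P) = (size P).+1 /\ lead_coef (dm P) = s (lead_coef P).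
Proof.
move=> P0.
have lc0 : s (lead_coef P) != 0 by apply: s_neq0; rewrite lead_coef_eq0.
have Hm : map_poly s P != 0 by rewrite map_poly_eq0_id0.
have Hs : size (map_poly s P * 'X) = (size P).+1.
  by rewrite size_mulX // size_map_poly_id0.
have Hlt : (size (map_poly d P) < size (map_poly s P * 'X)%R)%N.
  by rewrite Hs ltnS; apply: size_map_le.
rewrite /ore_dmul size_addl // lead_coefDl // lead_coefMX lead_coef_map_id0 //.
Qed.

Lemma iter_s_neq0 k x : x != 0 -> iter k s x != 0.
Proof. by elim: k => //= k IH /IH; apply: s_neq0. Qed.

Lemma iter_dm_size k (P : {poly K}) : P != 0 ->
  size (iter k dm P) = (size P + k)%N /\ lead_coef (iter k dm P) = iter k s (lead_coef P).
Proof.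
move=> P0; elim: k => [|k [IHs IHl]] /=; first by rewrite addn0.
have Q0 : iter k dm P != 0 by rewrite -size_poly_eq0 IHs addn_eq0 size_poly_eq0 negb_and P0.
by have [-> ->] := dm_size _ Q0; rewrite IHs IHl addnS.
Qed.

Lemma om_size (T L : {poly K}) : T != 0 -> L != 0 ->
  size (om T L) = (size T + size L).-1 /\
  lead_coef (om T L) = lead_coef T * iter (size T).-1 s (lead_coef L).
Proof.
move=> T0 L0.
have [n Hn] : exists n, size T = n.+1.
  by exists (size T).-1; rewrite prednK // size_poly_gt0.
rewrite /ore_mul Hn big_ord_recr /=.
have lcT : T`_n = lead_coef T by rewrite lead_coefE Hn.
have lcT0 : T`_n != 0 by rewrite lcT lead_coef_eq0.
have [Hs Hl] := iter_dm_size n _ L0.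
have Htop : size (T`_n *: iter n dm L) = (size L + n)%N by rewrite size_scale.
have HL : (0 < size L)%N by rewrite size_poly_gt0.
have Hlow : (size (\sum_(i < n) T`_i *: iter i dm L)%R < size L + n)%N.
  have : (size (\sum_(i < n) T`_i *: iter i dm L)%R <= (size L + n).-1)%N.
    apply: (big_ind (fun p : {poly K} => size p <= (size L + n).-1)%N).
    - by rewrite size_poly0.
    - by move=> p q Hp Hq; apply: leq_trans (size_add _ _) _; rewrite geq_max Hp Hq.
    - move=> i _; apply: leq_trans (size_scale_leq _ _) _.
      have [-> _] := iter_dm_size i _ L0.
      by rewrite -ltnS prednK ?addn_gt0 ?HL // ltn_add2l.
  by move=> H; apply: leq_ltn_trans H _; rewrite prednK ?addn_gt0 ?HL.
split.
  rewrite addrC size_addl ?Htop //.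
  by rewrite addnC.
by rewrite lead_coefDr ?Htop // lead_coefZ Hl lcT.
Qed.
End OreSize.


Section Dvd.
Variable R : comNzRingType.
Implicit Types a b c r : R.

Lemma dvdR_refl a : dvdR a a.
Proof. by exists 1; rewrite mul1r. Qed.
Lemma dvdR0 a : dvdR a 0.
Proof. by exists 0; rewrite mul0r. Qed.
Lemma dvdR_trans a b c : dvdR a b -> dvdR b c -> dvdR a c.
Proof. by move=> [x ->] [y ->]; exists (y * x); rewrite mulrA. Qed.
Lemma dvdRD c a b : dvdR c a -> dvdR c b -> dvdR c (a + b).
Proof. by move=> [x ->] [y ->]; exists (x + y); rewrite mulrDl. Qed.
Lemma dvdRN c a : dvdR c a -> dvdR c (- a).
Proof. by move=> [x ->]; exists (- x); rewrite mulNr. Qed.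
Lemma dvdRB c a b : dvdR c a -> dvdR c b -> dvdR c (a - b).
Proof. by move=> Ha Hb; apply: dvdRD => //; apply: dvdRN. Qed.
Lemma dvdRMl c a b : dvdR c a -> dvdR c (b * a).
Proof. by move=> [x ->]; exists (b * x); rewrite mulrA. Qed.
Lemma dvdRMr c a b : dvdR c a -> dvdR c (a * b).
Proof. by move=> H; rewrite mulrC; apply: dvdRMl. Qed.
Lemma dvdR_mul2 a b : dvdR a (a * b).
Proof. by exists b; rewrite mulrC. Qed.
Lemma dvdR_mul2r a b : dvdR b (a * b).
Proof. by exists a. Qed.

Lemma dvdR_sum I (r : seq I) (P : pred I) (F : I -> R) c :
  (forall i, P i -> dvdR c (F i)) -> dvdR c (\sum_(i <- r | P i) F i).
Proof.
move=> H; apply: (big_ind (dvdR c)) => //; [exact: dvdR0 | exact: dvdRD].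
Qed.

Lemma coef_dvd c (T : {poly R}) :
  (forall i, dvdR c T`_i) -> dvdR c%:P T.
Proof.
elim/poly_ind: T => [|T a IH] H; first by exists 0; rewrite mul0r.
have [B HB] : dvdR c%:P T.
  by apply: IH => i; have := H i.+1; rewrite coefD coefMX coefC /=  addr0.
have [b0 Hb0] : dvdR c a by have := H 0%N; rewrite coefD coefMX coefC /= add0r.
exists (B * 'X + b0%:P).
by rewrite HB Hb0 mulrDl polyCM -!mulrA (mulrC 'X).
Qed.

Lemma dvd_coef c (T : {poly R}) i : dvdR c%:P T -> dvdR c T`_i.
Proof. by move=> [B ->]; rewrite coefMC; apply: dvdR_mul2r. Qed.

Lemma dvdRC a b : dvdR a b -> dvdR a%:P b%:P.
Proof. by move=> [x ->]; exists x%:P; rewrite polyCM. Qed.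

End Dvd.

Lemma size_sub_lead (R : nzRingType) (f : {poly R}) : f != 0 ->
  (size (f - lead_coef f *: 'X^((size f).-1))%R < size f)%N.
Proof.
move=> f0; have Hs : (0 < size f)%N by rewrite size_poly_gt0.
rewrite -[(size f)]prednK //; apply/leq_sizeP => j Hj.
rewrite coefB coefZ coefXn.
case: (ltngtP j (size f).-1) => [Hlt|Hgt|->].
- by move: Hj; rewrite leqNgt Hlt.
- by rewrite mulr0 subr0 nth_default // -(prednK Hs).
- by rewrite mulr1 lead_coefE subrr.
Qed.

Section PID.
Variable R : idomainType.
Hypothesis R_pid : is_pid R.

Definition gen (S : R -> Prop) (r : R) : Prop :=
  forall J, is_ideal J -> (forall s, S s -> J s) -> J r.

Lemma gen_ideal S : is_ideal (gen S).
Proof.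
split.
- by move=> J [H0 _ _] _.
- move=> a b Ha Hb J HJ HS; have [_ HD _] := HJ; exact: HD (Ha J HJ HS) (Hb J HJ HS).
- move=> r a Ha J HJ HS; have [_ _ HM] := HJ; exact: HM (Ha J HJ HS).
Qed.

Lemma dvd_ideal (c : R) : is_ideal (dvdR c).
Proof. split; [exact: dvdR0 | exact: dvdRD | by move=> r a; apply: dvdRMl]. Qed.

Lemma content (S : R -> Prop) : exists g,
  [/\ forall s, S s -> dvdR g s,
      forall r, (forall s, S s -> dvdR r s) -> dvdR r g &
      forall J, is_ideal J -> (forall s, S s -> J s) -> J g].
Proof.
have [g Hg] := R_pid _ (gen_ideal S).
have gg : gen S g by apply/Hg; apply: dvdR_refl.
exists g; split => //.
- by move=> s Ss; apply/Hg => J HJ HS; apply: HS.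
- by move=> r Hr; apply: gg => //; apply: dvd_ideal.
Qed.

Definition irr (p : R) := p \isn't a GRing.unit /\
  forall a b, p = a * b -> a \is a GRing.unit \/ b \is a GRing.unit.
Definition primeR (p : R) := p \isn't a GRing.unit /\
  forall a b, dvdR p (a * b) -> dvdR p a \/ dvdR p b.

Lemma unit_of_mul1 (a b : R) : a * b = 1 -> b \is a GRing.unit.
Proof. by move=> H; apply/unitrPr; exists a; rewrite mulrC. Qed.

Lemma irr_prime (p : R) : irr p -> primeR p.
Proof.
move=> [pnu pirr]; split => // a b Hab.
case: (classic (dvdR p a)) => [|Hna]; first by left.
right.
pose J := fun x => exists u v, x = u * p + v * a.
have HJ : is_ideal J.
  split.
  - by exists 0, 0; rewrite !mul0r addr0.
  - move=> x y [u [v ->]] [u' [v' ->]]; exists (u + u'), (v + v'); ring.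
  - move=> r x [u [v ->]]; exists (r * u), (r * v); ring.
have [g Hg] := R_pid _ HJ.
have [t Ht] : dvdR g p by apply/Hg; exists 1, 0; ring.
have [w Hw] : dvdR g a by apply/Hg; exists 0, 1; ring.
case: (pirr _ _ Ht) => [tu|gu].
  exfalso; apply: Hna; exists (w * t^-1).
  by rewrite Hw Ht mulrA -(mulrA w) mulVr ?mulr1.
have [u [v Huv]] : J 1 by apply/Hg; exists g^-1; rewrite mulVr.
have -> : b = (u * b) * p + v * (a * b).
  by transitivity (1 * b); [rewrite mul1r | rewrite Huv; ring].
by apply: dvdRD; [apply: dvdR_mul2r | apply: dvdRMl].
Qed.

Lemma irr_div (r : R) : r != 0 -> r \isn't a GRing.unit -> exists p, irr p /\ dvdR p r.
Proof.
move=> r0 rnu; apply: NNPP => Hno.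
have step : forall s, dvdR s r -> s \isn't a GRing.unit ->
  exists a, [/\ a \isn't a GRing.unit, dvdR a s & ~ dvdR s a].
  move=> s sr snu.
  have s0 : s != 0 by apply: contraNneq r0 => s0; case: sr => x ->; rewrite s0 mulr0.
  have Hnirr : ~ irr s by move=> Hs; apply: Hno; exists s.
  have [a [b [Hsab anu bnu]]] : exists a b, [/\ s = a * b, ~ (a \is a GRing.unit) & ~ (b \is a GRing.unit)].
    apply: NNPP => Hc; apply: Hnirr; split => // a b Hab.
    case: (boolP (a \is a GRing.unit)) => Ha; first by left.
    case: (boolP (b \is a GRing.unit)) => Hb; first by right.
    by exfalso; apply: Hc; exists a, b; split => //; apply/negP.
  exists a; split => //; first by apply/negP.
    by exists b; rewrite Hsab mulrC.
  move=> [t Ht]; apply: bnu.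
  have : s * (t * b) = s * 1 by rewrite mulr1 {2}Hsab Ht; ring.
  by move/(mulfI s0) => H; apply: (@unit_of_mul1 t); rewrite H.
pose f := fun s : R => epsilon (inhabits (0 : R))
   (fun a : R => [/\ a \isn't a GRing.unit, dvdR a s & ~ dvdR s a]).
have fP : forall s, dvdR s r -> s \isn't a GRing.unit ->
   [/\ f s \isn't a GRing.unit, dvdR (f s) s & ~ dvdR s (f s)].
  move=> s sr snu; exact: (epsilon_spec _ _ (step s sr snu)).
pose rn := fun n => iter n f r.
have inv : forall n, dvdR (rn n) r /\ rn n \isn't a GRing.unit.
  elim => [|n [IH1 IH2]]; first by split => //; apply: dvdR_refl.
  have [H1 H2 _] := fP _ IH1 IH2; split => //=.
  exact: dvdR_trans H2 IH1.
have chain : forall m n, (m <= n)%N -> dvdR (rn n) (rn m).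
  move=> m n /subnK <-; elim: (n - m)%N => [|k IH]; first exact: dvdR_refl.
  have [I1 I2] := inv (k + m)%N.
  have [_ H2 _] := fP _ I1 I2.
  by rewrite addSn; apply: dvdR_trans H2 IH.
pose I := fun x => exists n, dvdR (rn n) x.
have HI : is_ideal I.
  split.
  - by exists 0%N; apply: dvdR0.
  - move=> x y [n Hn] [m Hm]; exists (maxn n m); apply: dvdRD.
      exact: dvdR_trans (chain _ _ (leq_maxl n m)) Hn.
    exact: dvdR_trans (chain _ _ (leq_maxr n m)) Hm.
  - by move=> x y [n Hn]; exists n; apply: dvdRMl.
have [g Hg] := R_pid _ HI.
have [n Hn] : I g by apply/Hg; apply: dvdR_refl.
have Hg1 : dvdR g (rn n.+1) by apply/Hg; exists n.+1; apply: dvdR_refl.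
have [I1 I2] := inv n.
have [_ _ H3] := fP _ I1 I2.
by apply: H3; apply: dvdR_trans Hn Hg1.
Qed.

Lemma prime_div (r : R) : r != 0 -> r \isn't a GRing.unit -> exists p, primeR p /\ dvdR p r.
Proof.
move=> r0 rnu; have [p [Hp Hpr]] := @irr_div r r0 rnu.
by exists p; split => //; apply: irr_prime.
Qed.

End PID.


Section Gauss1.
Variable R : idomainType.
Variable p : R.
Hypothesis pP : primeR R p.
Local Notation dK := (dvdR p%:P).

Lemma dK_lead (f : {poly R}) : dK f -> dvdR p (lead_coef f).
Proof. by move=> H; rewrite lead_coefE; apply: dvd_coef. Qed.

Lemma dK_leadX (f : {poly R}) : dvdR p (lead_coef f) ->
  dK (lead_coef f *: 'X^((size f).-1)).
Proof. move=> [a Ha]; rewrite Ha; exists (a *: 'X^((size f).-1)); rewrite [_ * p%:P]mulrC mul_polyC scalerA; congr (_ *: _); exact: mulrC. Qed.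

Lemma gauss1_key n : (forall f g : {poly R}, (size f + size g <= n)%N -> ~ dK f -> ~ dK g -> ~ dK (f * g)) ->
  forall f g : {poly R}, (size f + size g <= n.+1)%N -> ~ dK f -> ~ dK g ->
  dvdR p (lead_coef f) -> ~ dK (f * g).
Proof.
move=> IH f g Hs nf ng lf Hfg.
have f0 : f != 0 by apply: contra_notN nf => /eqP ->; apply: dvdR0.
set f' := f - lead_coef f *: 'X^((size f).-1).
have Hf' : (size f' < size f)%N by apply: size_sub_lead.
have nf' : ~ dK f'.
  move=> Hf'd; apply: nf; have -> : f = f' + lead_coef f *: 'X^((size f).-1) by rewrite /f' subrK.
  by apply: dvdRD => //; apply: dK_leadX.
apply: (IH f' g) => //.
  by rewrite -ltnS; apply: leq_trans Hs; rewrite ltn_add2r.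
have -> : f' * g = f * g - (lead_coef f *: 'X^((size f).-1)) * g by rewrite /f' mulrBl.
by apply: dvdRB => //; apply: dvdRMr; apply: dK_leadX.
Qed.

Lemma gauss1 (f g : {poly R}) : ~ dK f -> ~ dK g -> ~ dK (f * g).
Proof.
have [pnu pprime] := pP.
suff H : forall n (f g : {poly R}), (size f + size g <= n)%N -> ~ dK f -> ~ dK g -> ~ dK (f * g).
  by apply: (H _ f g (leqnn _)).
elim => [|n IH] {}f {}g Hs nf ng.
  exfalso; apply: nf; move: Hs; rewrite leqn0 addn_eq0 size_poly_eq0 => /andP [/eqP -> _].
  exact: dvdR0.
case: (classic (dvdR p (lead_coef f))) => lf; first exact: (gauss1_key _ IH _ _ Hs nf ng lf).
case: (classic (dvdR p (lead_coef g))) => lg.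
  by rewrite mulrC; apply: (gauss1_key _ IH) => //; rewrite addnC.
move=> /dK_lead; rewrite lead_coefM => /pprime [] //.
Qed.

End Gauss1.


Section Gauss2.
Variable R : idomainType.
Variables (s d : {poly R} -> {poly R}).
Hypothesis s0 : s 0 = 0.
Hypothesis d0 : d 0 = 0.
Hypothesis s_add : forall p q, s (p + q) = s p + s q.
Hypothesis d_add : forall p q, d (p + q) = d p + d q.
Hypothesis s_neq0 : forall x, x != 0 -> s x != 0.
Variable p : R.
Hypothesis pP : primeR R p.
Local Notation dK := (dvdR p%:P).
Hypothesis sK : forall f, dK f -> dK (s f).
Hypothesis sKr : forall f, dK (s f) -> dK f.
Hypothesis dKd : forall f, dK f -> dK (d f).
Local Notation dm := (ore_dmul s d).
Local Notation om := (ore_mul s d).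
Definition dO (A : {poly {poly R}}) := forall i, dK A`_i.

Lemma dO0 : dO 0.
Proof. by move=> i; rewrite coef0; apply: dvdR0. Qed.
Lemma dOD (A B : {poly {poly R}}) : dO A -> dO B -> dO (A + B).
Proof. by move=> HA HB i; rewrite coefD; apply: dvdRD. Qed.
Lemma dOB (A B : {poly {poly R}}) : dO A -> dO B -> dO (A - B).
Proof. by move=> HA HB i; rewrite coefB; apply: dvdRB. Qed.
Lemma dOZ (a : {poly R}) (A : {poly {poly R}}) : dO A -> dO (a *: A).
Proof. by move=> HA i; rewrite coefZ; apply: dvdRMl. Qed.
Lemma dOZl (a : {poly R}) (A : {poly {poly R}}) : dK a -> dO (a *: A).
Proof. by move=> Ha i; rewrite coefZ; apply: dvdRMr. Qed.
Lemma dO_dm (A : {poly {poly R}}) : dO A -> dO (dm A).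
Proof.
move=> HA i; rewrite (@coef_dm _ s d s0 d0); apply: dvdRD; last exact: dKd.
by case: (i == 0%N); [apply: dvdR0 | apply: sK].
Qed.
Lemma dO_iter k (A : {poly {poly R}}) : dO A -> dO (iter k dm A).
Proof. by elim: k => //= k IH /IH; apply: dO_dm. Qed.
Lemma dO_om (A B : {poly {poly R}}) : dO B -> dO (om A B).
Proof.
move=> HB j; rewrite /ore_mul coef_sum; apply: dvdR_sum => i _.
exact: (dOZ _ _ (dO_iter i _ HB) j).
Qed.
Lemma iter_sKr k (f : {poly R}) : dK (iter k s f) -> dK f.
Proof. by elim: k => //= k IH /sKr /IH. Qed.

Lemma gauss2_keyA n : (forall A L : {poly {poly R}}, (size A + size L <= n)%N -> ~ dO A -> ~ dO L -> ~ dO (om A L)) ->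
  forall A L : {poly {poly R}}, (size A + size L <= n.+1)%N -> ~ dO A -> ~ dO L ->
  dK (lead_coef A) -> ~ dO (om A L).
Proof.
move=> IH A L Hs nA nL lA HAL.
have A0 : A != 0 by apply: contra_notN nA => /eqP ->; apply: dO0.
set A' := A - lead_coef A *: 'X^((size A).-1).
have HA' : (size A' < size A)%N by apply: size_sub_lead.
have Hd : dO (lead_coef A *: 'X^((size A).-1)) by apply: dOZl.
have nA' : ~ dO A'.
  move=> H; apply: nA; have -> : A = A' + lead_coef A *: 'X^((size A).-1) by rewrite /A' subrK.
  exact: dOD.
apply: (IH A' L) => //.
  by rewrite -ltnS; apply: leq_trans Hs; rewrite ltn_add2r.
have -> : om A' L = om A L - om (lead_coef A *: 'X^((size A).-1)) L.
  by rewrite /A' omD -scaleNr omZ omZ scaleNr.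
apply: dOB => //; rewrite omZ; exact: dOZl.
Qed.

Lemma gauss2_keyL n : (forall A L : {poly {poly R}}, (size A + size L <= n)%N -> ~ dO A -> ~ dO L -> ~ dO (om A L)) ->
  forall A L : {poly {poly R}}, (size A + size L <= n.+1)%N -> ~ dO A -> ~ dO L ->
  dK (lead_coef L) -> ~ dO (om A L).
Proof.
move=> IH A L Hs nA nL lL HAL.
have L0 : L != 0 by apply: contra_notN nL => /eqP ->; apply: dO0.
set L' := L - lead_coef L *: 'X^((size L).-1).
have HL' : (size L' < size L)%N by apply: size_sub_lead.
have Hd : dO (lead_coef L *: 'X^((size L).-1)) by apply: dOZl.
have nL' : ~ dO L'.
  move=> H; apply: nL; have -> : L = L' + lead_coef L *: 'X^((size L).-1) by rewrite /L' subrK.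
  exact: dOD.
apply: (IH A L') => //.
  by rewrite -ltnS; apply: leq_trans Hs; rewrite ltn_add2l.
have -> : om A L' = om A L - om A (lead_coef L *: 'X^((size L).-1)).
  have E : om A L = om A L' + om A (lead_coef L *: 'X^((size L).-1)).
    by rewrite -(@omDr _ s d s0 d0 s_add d_add) /L' subrK.
  by rewrite E addrK.
apply: dOB => //; exact: dO_om.
Qed.

Lemma gauss2 (A L : {poly {poly R}}) : ~ dO A -> ~ dO L -> ~ dO (om A L).
Proof.
suff H : forall n (A L : {poly {poly R}}), (size A + size L <= n)%N -> ~ dO A -> ~ dO L -> ~ dO (om A L).
  by apply: (H _ A L (leqnn _)).
elim => [|n IH] {}A {}L Hs nA nL.
  exfalso; apply: nA; move: Hs; rewrite leqn0 addn_eq0 size_poly_eq0 => /andP [/eqP -> _].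
  exact: dO0.
case: (classic (dK (lead_coef A))) => lA; first exact: (gauss2_keyA _ IH _ _ Hs nA nL lA).
case: (classic (dK (lead_coef L))) => lL; first exact: (gauss2_keyL _ IH _ _ Hs nA nL lL).
have A0 : A != 0 by apply: contra_notN nA => /eqP ->; apply: dO0.
have L0 : L != 0 by apply: contra_notN nL => /eqP ->; apply: dO0.
have [_ Hl] := @om_size _ s d s0 d0 s_neq0 A L A0 L0.
move=> H; have := H (size (om A L)).-1; rewrite -lead_coefE Hl.
have nI : ~ dK (iter (size A).-1 s (lead_coef L)) by move/iter_sKr.
exact: (@gauss1 R p pP _ _ lA nI).
Qed.
End Gauss2.


Section GLemma.
Variable R : idomainType.
Hypothesis R_pid : is_pid R.
Variables (s d : {poly R} -> {poly R}).
Hypothesis s0 : s 0 = 0.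
Hypothesis d0 : d 0 = 0.
Hypothesis s_add : forall p q, s (p + q) = s p + s q.
Hypothesis d_add : forall p q, d (p + q) = d p + d q.
Hypothesis s_neq0 : forall x, x != 0 -> s x != 0.
Hypothesis sK : forall (c : R) f, dvdR c%:P f -> dvdR c%:P (s f).
Hypothesis sKr : forall (c : R) f, dvdR c%:P (s f) -> dvdR c%:P f.
Hypothesis dKd : forall (c : R) f, dvdR c%:P f -> dvdR c%:P (d f).
Local Notation om := (ore_mul s d).

Lemma primitive_neq0 (L : {poly {poly R}}) : R_primitive L -> L != 0.
Proof.
move=> HL; apply/negP => /eqP L0.
have := HL 0 => H; have : (0 : R) \is a GRing.unit.
  by apply: H => i j; rewrite L0 coef0 coef0; apply: dvdR0.
by rewrite unitr0.
Qed.

Lemma poly2_eq0 (M : {poly {poly R}}) : (forall i j, M`_i`_j = 0) -> M = 0.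
Proof.
by move=> H; apply/polyP => i; rewrite coef0; apply/polyP => j; rewrite coef0 H.
Qed.

Lemma G_lemma (L : {poly {poly R}}) (Lprim : R_primitive L) (A : {poly {poly R}}) (c : R) :
  (forall i j, dvdR c (om A L)`_i`_j) -> forall i j, dvdR c A`_i`_j.
Proof.
move=> Hc.
have [g [Hg1 Hg2 Hg3]] := @content R R_pid (fun x => exists i j, x = A`_i`_j).
have HgA : forall i j, dvdR g A`_i`_j by move=> i j; apply: Hg1; exists i, j.
case: (eqVneq g 0) => [g0|g0].
  move=> i j; have [b Hb] := HgA i j; rewrite Hb g0 mulr0; exact: dvdR0.
have [A0 HA0] : dvdR (g%:P)%:P A.
  apply: coef_dvd => i; apply: coef_dvd => j; exact: HgA.
have EA : A = (g%:P) *: A0 by rewrite HA0 mulrC mul_polyC.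
have EAc : forall i j, A`_i`_j = g * A0`_i`_j by move=> i j; rewrite EA coefZ coefCM.
set M := om A0 L.
have EMc : forall i j, (om A L)`_i`_j = g * M`_i`_j.
  by move=> i j; rewrite EA omZ coefZ coefCM.
have A0prim : forall r, (forall i j, dvdR r A0`_i`_j) -> r \is a GRing.unit.
  move=> r Hr.
  have [t Ht] : dvdR (r * g) g.
    apply: Hg2 => x [i [j ->]]; rewrite EAc; have [b ->] := Hr i j.
    by exists b; ring.
  have : (t * r) * g = 1 * g by rewrite mul1r -mulrA -Ht.
  by move/(mulIf g0) => H; apply: (@unit_of_mul1 _ t); rewrite H.
have A00 : A0 != 0.
  apply/negP => /eqP A00.
  have [t Ht] : dvdR 0 g.
    by apply: Hg2 => x [i [j ->]]; rewrite EAc A00 !coef0 mulr0; apply: dvdR0.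
  by move: g0; rewrite Ht mulr0 eqxx.
have L0 := primitive_neq0 _ Lprim.
have Mprim : forall r, (forall i j, dvdR r M`_i`_j) -> r \is a GRing.unit.
  move=> r Hr; case: (boolP (r \is a GRing.unit)) => // rnu; exfalso.
  case: (eqVneq r 0) => [r0|r0].
    have M0 : M = 0.
      apply: poly2_eq0 => i j; have [b ->] := Hr i j; by rewrite r0 mulr0.
    have [Hs _] := @om_size _ s d s0 d0 s_neq0 A0 L A00 L0.
    move: Hs; rewrite -/M M0 size_poly0.
    have : (0 < size A0)%N by rewrite size_poly_gt0.
    have : (0 < size L)%N by rewrite size_poly_gt0.
    case: (size A0) => [|a] //; case: (size L) => [|b] // _ _.
    by rewrite addSn addnS.
  have [p [pP pr]] := @prime_div R R_pid r r0 rnu.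
  have [pnu _] := pP.
  apply: (@gauss2 R s d s0 d0 s_add d_add s_neq0 p pP (sK p) (sKr p) (dKd p) A0 L).
  - move=> H; move/negP: pnu; apply; apply: A0prim => i j; exact: dvd_coef (H i).
  - move=> H; move/negP: pnu; apply; apply: Lprim => i j; exact: dvd_coef (H i).
  - move=> i; apply: coef_dvd => j; exact: dvdR_trans pr (Hr i j).
have [h [Hh1 Hh2 Hh3]] := @content R R_pid (fun x => exists i j, x = M`_i`_j).
have hu : h \is a GRing.unit by apply: Mprim => i j; apply: Hh1; exists i, j.
have HJ : is_ideal (fun x => dvdR c (g * x)).
  split.
  - by rewrite mulr0; apply: dvdR0.
  - by move=> x y Hx Hy; rewrite mulrDr; apply: dvdRD.
  - by move=> r x Hx; rewrite mulrCA; apply: dvdRMl.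
have cgh : dvdR c (g * h).
  by apply: (Hh3 (fun x => dvdR c (g * x)) HJ) => x [i [j ->]]; rewrite -EMc.
have cg : dvdR c g by rewrite -(mulrK hu g); apply: dvdRMr.
by move=> i j; apply: dvdR_trans cg (HgA i j).
Qed.

Lemma G_poly (e f : {poly R}) (c : R) :
  (forall r, (forall j, dvdR r e`_j) -> r \is a GRing.unit) ->
  (forall j, dvdR c (e * f)`_j) -> forall j, dvdR c f`_j.
Proof.
move=> Hprim Hc.
case: (eqVneq f 0) => [->|f0]; first by move=> j; rewrite coef0; apply: dvdR0.
have Lprim : R_primitive (e%:P).
  move=> r Hr; apply: Hprim => j; have := Hr 0%N j; by rewrite coefC.
have E : om (f%:P) (e%:P) = (f * e)%:P.
  by rewrite /ore_mul size_polyC f0 big_ord1 /= coefC /= polyCM mul_polyC.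
move=> j; have := @G_lemma _ Lprim (f%:P) c.
rewrite E => H; have := H _ 0%N j; rewrite coefC /=; apply.
move=> i k; rewrite coefC; case: (i == 0%N); last by rewrite coef0; apply: dvdR0.
by rewrite mulrC.
Qed.
End GLemma.


Local Open Scope quotient_scope.
Local Notation "x %:F" := (@FracField.tofrac _ x).

Lemma fnum_den (D : idomainType) (x : {fraction D}) :
  fden x != 0 /\ x * (fden x)%:F = (fnum x)%:F.
Proof.
rewrite /fden /fnum; split; first exact: denom_ratioP.
rewrite -{1}[x]reprK; set r := repr x.
unlock FracField.tofrac. rewrite /= !piE.
apply/eqmodP => /=. rewrite FracField.equivfE /=.
rewrite !numden_Ratio ?oner_neq0 ?mulf_neq0 ?denom_ratioP ?oner_neq0 //.
by rewrite !mulr1 mulrC.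
Qed.

Lemma tf_inj (D : idomainType) : injective (@FracField.tofrac D).
Proof. by move=> x y /eqP; rewrite tofrac_eq => /eqP. Qed.

Lemma fnum_tf (D : idomainType) (f : D) : fnum (f%:F) = f * fden (f%:F).
Proof.
have [_ H] := fnum_den _ (f%:F); apply: tf_inj; by rewrite -H rmorphM.
Qed.

Lemma clear_den (D : idomainType) (T : {poly {fraction D}}) :
  exists dd : D, dd != 0 /\ exists T0 : {poly D}, dd%:F *: T = map_poly (@FracField.tofrac D) T0.
Proof.
elim/poly_ind: T => [|T a [d1 [d10 [T01 H1]]]].
  by exists 1; split; [exact: oner_neq0 | exists 0; rewrite scaler0 rmorph0].
have [m0 Ha] := fnum_den _ a.
exists (d1 * fden a); split; first by rewrite mulf_neq0.
exists ((fden a)%:P * T01 * 'X + (d1 * fnum a)%:P).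
rewrite !rmorphD !rmorphM /= map_polyX !map_polyC /= -H1 -Ha.
rewrite -!mul_polyC !polyCM; ring.
Qed.

Lemma fld_aux (F : fieldType) (A B C M S : F) : S != 0 -> M != 0 ->
  (A * B + C * M) / M - A * S * B / (S * M) = C.
Proof. by move=> S0 M0; field; rewrite S0 M0. Qed.

Section Main.
Variable R : idomainType.
Hypothesis R_pid : is_pid R.
Variable sigma : {poly R} -> {poly R}.
Hypothesis sigma_add : forall p q, sigma (p + q) = sigma p + sigma q.
Hypothesis sigma_mul : forall p q, sigma (p * q) = sigma p * sigma q.
Hypothesis sigma_1 : sigma 1 = 1.
Hypothesis sigma_Rlin : forall (a : R) p, sigma (a *: p) = a *: sigma p.
Hypothesis sigma_bij : bijective sigma.
Variable delta : {poly R} -> {poly R}.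
Hypothesis delta_add : forall p q, delta (p + q) = delta p + delta q.
Hypothesis delta_Rlin : forall (a : R) p, delta (a *: p) = a *: delta p.
Hypothesis delta_mul : forall f g, delta (f * g) = sigma f * delta g + delta f * g.

Lemma sigma0 : sigma 0 = 0.
Proof. by have := sigma_Rlin 0 0; rewrite !scale0r. Qed.
Lemma delta0 : delta 0 = 0.
Proof. by have := delta_Rlin 0 0; rewrite !scale0r. Qed.
Lemma sigma_inj : injective sigma.
Proof. exact: bij_inj. Qed.
Lemma sigma_neq0 x : x != 0 -> sigma x != 0.
Proof. by apply: contraNneq => H; apply/eqP; apply: sigma_inj; rewrite H sigma0. Qed.
Lemma sigmaC (a : R) : sigma a%:P = a%:P.
Proof. have E : a%:P = a *: (1 : {poly R}) by rewrite -mul_polyC mulr1.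
by rewrite E sigma_Rlin sigma_1. Qed.
Lemma delta1 : delta 1 = 0.
Proof.
have := delta_mul 1 1; rewrite mulr1 sigma_1 mul1r => H.
by have := congr1 (fun x => x - delta 1) H; rewrite /= mulr1 addrK subrr => <-.
Qed.
Lemma deltaC (a : R) : delta a%:P = 0.
Proof. have E : a%:P = a *: (1 : {poly R}) by rewrite -mul_polyC mulr1.
by rewrite E delta_Rlin delta1 scaler0. Qed.

Lemma sK (c : R) f : dvdR c%:P f -> dvdR c%:P (sigma f).
Proof. by move=> [b ->]; exists (sigma b); rewrite sigma_mul sigmaC. Qed.
Lemma sKr (c : R) f : dvdR c%:P (sigma f) -> dvdR c%:P f.
Proof.
have [g gK Kg] := sigma_bij.
move=> [b Hb]; exists (g b); apply: sigma_inj; by rewrite Hb sigma_mul sigmaC Kg.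
Qed.
Lemma dKd (c : R) f : dvdR c%:P f -> dvdR c%:P (delta f).
Proof. by move=> [b ->]; exists (delta b); rewrite delta_mul deltaC mulr0 add0r. Qed.

Local Notation tf := (@FracField.tofrac {poly R}).

Lemma sigmaF_tf f : sigmaF sigma (tf f) = tf (sigma f).
Proof.
have [m0 _] := fnum_den _ (tf f).
have sm0 : tf (sigma (fden (tf f))) != 0 by rewrite tofrac_eq0; exact: sigma_neq0.
by rewrite /sigmaF fnum_tf sigma_mul rmorphM (mulfK sm0).
Qed.

Lemma deltaF_tf f : deltaF sigma delta (tf f) = tf (delta f).
Proof.
have [m0 _] := fnum_den _ (tf f).
have sm0 : tf (sigma (fden (tf f))) != 0 by rewrite tofrac_eq0; exact: sigma_neq0.
have m0' : tf (fden (tf f)) != 0 by rewrite tofrac_eq0.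
rewrite /deltaF fnum_tf delta_mul sigma_mul !rmorphD !rmorphM /=.
apply: fld_aux; [exact: sm0 | exact: m0'].
Qed.

Lemma iter_sigma_dvd k (b : {poly R}) (c : R) : iter k sigma (b * c%:P) = iter k sigma b * c%:P.
Proof. by elim: k => //= k ->; rewrite sigma_mul sigmaC. Qed.

Theorem main_aux (L : {poly {poly R}}) (c : R)
  (L_prim : R_primitive L)
  (c_lc : dvdRP c (lead_coef L)) :
  forall Q : {poly {poly R}}, Q != 0 -> in_cont sigma delta L Q ->
    dvdRP c (lead_coef Q).
Proof.
move=> Q Q0 [T HT].
have [dd [dd0 [T0 HT0]]] := clear_den _ T.
have E1 : dd *: Q = ore_mul sigma delta T0 L.
  apply: (map_inj_poly (@tf_inj _) (rmorph0 _)).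
  rewrite map_polyZ HT -omZ HT0.
  by rewrite (@map_om _ _ _ (@tf_inj _) _ _ _ _ sigma0 delta0 sigmaF_tf deltaF_tf).
have [e [He1 He2 He3]] := @content R R_pid (fun x => exists j, x = dd`_j).
have e0 : e != 0.
  apply/negP => /eqP e0; move/negP: dd0; apply; apply/eqP/polyP => j.
  have [b ->] := He1 _ (ex_intro _ j erefl); by rewrite e0 mulr0 coef0.
have [d0 Hd0] : dvdR e%:P dd by apply: coef_dvd => j; apply: He1; exists j.
have d0prim : forall r, (forall j, dvdR r d0`_j) -> r \is a GRing.unit.
  move=> r Hr.
  have [t Ht] : dvdR (r * e) e.
    apply: He2 => x [j ->]; rewrite Hd0 coefMC; have [b ->] := Hr j.
    by exists b; rewrite mulrA.
  have : (t * r) * e = 1 * e by rewrite mul1r -mulrA -Ht.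
  by move/(mulIf e0) => H; apply: (@unit_of_mul1 _ t); rewrite H.
have L0 := @primitive_neq0 _ L L_prim.
have He_om : forall i j, dvdR e (ore_mul sigma delta T0 L)`_i`_j.
  move=> i j; rewrite -E1 coefZ; apply: dvd_coef.
  by rewrite Hd0; exists (d0 * Q`_i); rewrite mulrAC.
have HT0e := @G_lemma R R_pid sigma delta sigma0 delta0 sigma_add delta_add sigma_neq0
   sK sKr dKd L L_prim T0 e He_om.
have [T1 HT1] : dvdR (e%:P)%:P T0.
  by apply: coef_dvd => i; apply: coef_dvd => j; apply: HT0e.
have E2 : d0 *: Q = ore_mul sigma delta T1 L.
  have : e%:P *: (d0 *: Q) = e%:P *: ore_mul sigma delta T1 L.
    have Eom : ore_mul sigma delta T0 L = e%:P *: ore_mul sigma delta T1 L.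
      by rewrite HT1 mulrC mul_polyC omZ.
    by rewrite -Eom -E1 Hd0 scalerA mulrC.
  move=> H; apply/polyP => i; have := congr1 (fun P : {poly {poly R}} => P`_i) H; rewrite /= !coefZ.
  by apply: mulfI; rewrite polyC_eq0.
have d00 : d0 != 0 by apply: contraNneq dd0 => H; rewrite Hd0 H mul0r.
have T10 : T1 != 0.
  apply: contraNneq Q0 => T10; move/eqP: E2; rewrite T10 om0l scale_poly_eq0.
  by rewrite (negbTE d00).
have [_ Hl] := @om_size _ sigma delta sigma0 delta0 sigma_neq0 T1 L T10 L0.
have Hlc : lead_coef (d0 *: Q) = d0 * lead_coef Q by rewrite lead_coefZ.
have [b Hb] := c_lc.
have Hc : forall j, dvdR c (d0 * lead_coef Q)`_j.
  move=> j; apply: dvd_coef; rewrite -Hlc E2 Hl Hb iter_sigma_dvd.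
  by exists (lead_coef T1 * iter (size T1).-1 sigma b); rewrite mulrA.
apply: coef_dvd; exact: (@G_poly R R_pid sigma delta sigma0 delta0 sigma_add delta_add sigma_neq0 sK sKr dKd d0 _ c d0prim Hc).
Qed.
End Main.


Theorem mainTheorem4 (R : idomainType) (R_pid : is_pid R)
  (gamma tau : R) (gamma_unit : gamma \is a GRing.unit)
  (sigma : {poly R} -> {poly R})
  (sigma_add : forall p q, sigma (p + q) = sigma p + sigma q)
  (sigma_mul : forall p q, sigma (p * q) = sigma p * sigma q)
  (sigma_1 : sigma 1 = 1)
  (sigma_Rlin : forall (a : R) p, sigma (a *: p) = a *: sigma p)
  (sigma_bij : bijective sigma)
  (sigma_X : sigma 'X = gamma *: 'X + tau%:P)
  (delta : {poly R} -> {poly R})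
  (delta_add : forall p q, delta (p + q) = delta p + delta q)
  (delta_Rlin : forall (a : R) p, delta (a *: p) = a *: delta p)
  (delta_mul : forall f g, delta (f * g) = sigma f * delta g + delta f * g)
  (delta_X : (size (delta 'X) <= 2)%N)
  (L : {poly {poly R}}) (L_ord : (1 < size L)%N)
  (c : R) (c_nonunit : c \isn't a GRing.unit)
  (L_prim : R_primitive L)
  (c_lc : dvdRP c (lead_coef L)) :
  forall Q : {poly {poly R}}, Q != 0 -> in_cont sigma delta L Q ->
    dvdRP c (lead_coef Q).
Proof.
move=> Q Q0 HQ.
exact: (@main_aux R R_pid sigma sigma_add sigma_mul sigma_1 sigma_Rlin sigma_bij
  delta delta_add delta_Rlin delta_mul L c L_prim c_lc Q Q0 HQ).
Qed.
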